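(* Let $\mathbb{F}$ be an algebraically closed field of characteristic different from $2$. There is no finite-dimensional nilpotent Lie algebra $L$ over $\mathbb{F}$ with $\dim L^{2}=3$, $\dim Z(L)=1$ and $s(L)=5$ such that $L/Z(L)\cong L_{5,8}\oplus A(2)$.
   Context: Schur multiplier: if $L\cong F/R$ with $F$ a free Lie algebra, then $\mathcal{M}(L)\cong (R\cap F^{2})/[R,F]$. For a non-abelian nilpotent Lie algebra $L$ of dimension $n$, $s(L)\ge0$ is defined by $\dim\mathcal{M}(L)=\frac12(n-1)(n-2)+1-s(L)$. $A(2)$ is the $2$-dimensional abelian Lie algebra. $L_{5,8}$ has basis $x_1,\dots,x_5$ with nonzero brackets $[x_1,x_2]=x_4$, $[x_1,x_3]=x_5$. *)

(* Defs.v *)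
From HB Require Import structures.
From mathcomp Require Import all_boot all_order all_algebra.
Set Implicit Arguments.
Unset Strict Implicit.
Unset Printing Implicit Defensive.
Import GRing.Theory.
Local Open Scope ring_scope.

Section LieDefs.
Variables (F : fieldType) (V : vectType F) (br : V -> V -> V).

Definition is_lie_bracket : Prop :=
  [/\ (forall (a : F) (x y z : V), br (a *: x + y) z = a *: br x z + br y z),
      (forall (a : F) (x y z : V), br x (a *: y + z) = a *: br x y + br x z),
      (forall x : V, br x x = 0) &
      (forall x y z : V, br x (br y z) + br y (br z x) + br z (br x y) = 0)].

(* [U, W] : the subspace spanned by all brackets [u, w], u in U, w in W
   (by bilinearity it suffices to take u, w in bases of U, W). *)
Definition brv (U W : {vspace V}) : {vspace V} :=
  (<< [seq br u w | u <- vbasis U, w <- vbasis W] >>)%VS.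

Definition derivedL : {vspace V} := brv fullv fullv.

(* lower central series: lcs k = L^(k+1); L^1 = L, L^(k+1) = [L, L^k] *)
Definition lcs (k : nat) : {vspace V} := iter k (brv fullv) fullv.

Definition nilpotentL : Prop := exists k, lcs k = 0%VS.

Definition centerL : {vspace V} :=
  (\bigcap_(i < \dim {:V}) lker (linfun (fun x => br x (tnth (vbasis fullv) i))))%VS.

(* ---- Schur multiplier via the Chevalley-Eilenberg complex ----
   M(L) = H_2(L) = ker (d2 : /\^2 L -> L) / im (d3 : /\^3 L -> /\^2 L).
   /\^2 L is realised inside n x n matrices (n = dim L) by
   x /\ y |-> (x_i y_j - x_j y_i)_{i,j} (coordinates in vbasis fullv). *)
Definition dimL : nat := \dim {:V}.
Definition bL : dimL.-tuple V := vbasis fullv.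

Definition wedge (x y : V) : 'M[F]_dimL :=
  \matrix_(i, j) (coord bL i x * coord bL j y - coord bL j x * coord bL i y).

Definition wedge2 : {vspace 'M[F]_dimL} :=
  (<< [seq wedge u w | u <- bL, w <- bL] >>)%VS.

(* d2 (x /\ y) = [x, y] *)
Definition d2 (A : 'M[F]_dimL) : V :=
  \sum_(i < dimL) \sum_(j < dimL | (i < j)%N) A i j *: br (tnth bL i) (tnth bL j).

Definition cycles2 : {vspace 'M[F]_dimL} := (wedge2 :&: lker (linfun d2))%VS.

Definition boundaries2 : {vspace 'M[F]_dimL} :=
  (<< flatten [seq [seq (wedge (br x y) z + wedge (br y z) x + wedge (br z x) y)%R
                   | y <- bL, z <- bL] | x <- bL] >>)%VS.

Definition schur_dim : nat := (\dim cycles2 - \dim boundaries2)%N.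

Definition s_inv : int :=
  ((((dimL.-1 * dimL.-2) %/ 2) + 1)%N)%:Z - (schur_dim)%:Z.

End LieDefs.

(* L_{5,8} (+) A(2) on F^7: basis x1..x7 = coordinates 0..6,
   nonzero brackets [x1,x2] = x4, [x1,x3] = x5 (and antisymmetric ones). *)
Definition br_L58A2 (F : fieldType) (u v : 'rV[F]_7) : 'rV[F]_7 :=
  \row_(k < 7)
    (if (k == 3 :> nat) then u 0 (inord 0) * v 0 (inord 1) - u 0 (inord 1) * v 0 (inord 0)
     else if (k == 4 :> nat) then u 0 (inord 0) * v 0 (inord 2) - u 0 (inord 2) * v 0 (inord 0)
     else 0).

(* L / Z(L) is isomorphic to L_{5,8} (+) A(2): by the first isomorphism
   theorem, there is a surjective Lie algebra homomorphism L -> L_{5,8} (+) A(2)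
   with kernel Z(L). *)
Definition quot_center_iso_L58A2 (F : fieldType) (V : vectType F)
    (br : V -> V -> V) : Prop :=
  exists f : V -> 'rV[F]_7,
    [/\ (forall (a : F) (x y : V), f (a *: x + y) = a *: f x + f y),
        (forall w : 'rV[F]_7, exists x, f x = w),
        (forall x : V, f x = 0 <-> x \in centerL br) &
        (forall x y : V, f (br x y) = br_L58A2 (f x) (f y))].

(* Main.v *)
Require Import Defs.
From HB Require Import structures.
From mathcomp Require Import all_boot all_order all_algebra.
From mathcomp Require Import ring zify.
Set Implicit Arguments. Unset Strict Implicit. Unset Printing Implicit Defensive.
Import GRing.Theory.
Local Open Scope ring_scope.

Lemma linfunE' (K : fieldType) (aT rT : vectType K) (f : aT -> rT)
  (hf : forall a x y, f (a *: x + y) = a *: f x + f y) x : linfun f x = f x.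
Proof.
pose lf : {linear aT -> rT} := HB.pack f (GRing.isLinear.Build K aT rT *:%R f hf).
exact: (lfunE lf x).
Qed.

Lemma lin_sum (K : fieldType) (aT : vectType K) (rT : zmodType) (s : K -> rT -> rT)
   (g : aT -> rT) (hg : forall a x y, g (a *: x + y) = s a (g x) + g y)
   (hs : forall x, s 1 x = x) I r (P : pred I) (h : I -> aT) :
  g (\sum_(i <- r | P i) h i) = \sum_(i <- r | P i) g (h i).
Proof.
have g0 : g 0 = 0.
  by have := hg 1 0 0; rewrite addr0 scale1r hs => /eqP; rewrite -subr_eq subrr eq_sym => /eqP.
have gD x y : g (x + y) = g x + g y by rewrite -[x]scale1r hg hs scale1r.
by apply: (big_ind2 (fun a b => g a = b)) => // x1 x2 y1 y2 <- <-.
Qed.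

Lemma notin_span (K : fieldType) (M : vectType K) (psi : M -> K)
  (hpsi : forall a x y, psi (a *: x + y) = a * psi x + psi y) (X : seq M) x :
  (forall y, y \in X -> psi y = 0) -> psi x != 0 -> x \notin <<X>>%VS.
Proof.
move=> HX Hx; apply/negP => Hin.
have Ex := @coord_span _ _ _ (in_tuple X) x Hin.
have p0 : psi 0 = 0.
  by have := hpsi 1 0 0; rewrite addr0 scale1r mul1r => /eqP; rewrite -subr_eq subrr eq_sym => /eqP.
move: Hx; rewrite Ex (lin_sum hpsi (@mul1r K)) big1 ?eqxx // => i _.
rewrite -[_ *: _]addr0 hpsi p0 addr0 HX ?mulr0 //.
by apply: mem_nth; case: i.
Qed.

Section Lie.
Variables (F : fieldType) (V : vectType F) (br : V -> V -> V).
Hypothesis Hl : is_lie_bracket br.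

Local Notation n := (dimL V).
Local Notation b := (bL V).

Lemma brL a x y z : br (a *: x + y) z = a *: br x z + br y z.
Proof. by case: Hl. Qed.
Lemma brR a x y z : br x (a *: y + z) = a *: br x y + br x z.
Proof. by case: Hl. Qed.
Lemma brxx x : br x x = 0.
Proof. by case: Hl. Qed.
Lemma br0l x : br 0 x = 0.
Proof.
have := brL 1 0 0 x; rewrite addr0 !scale1r => /esym /eqP.
by rewrite -subr_eq0 addrK => /eqP.
Qed.
Lemma br0r x : br x 0 = 0.
Proof.
have := brR 1 x 0 0; rewrite addr0 !scale1r => /esym /eqP.
by rewrite -subr_eq0 addrK => /eqP.
Qed.
Lemma brDl x y z : br (x + y) z = br x z + br y z.
Proof. by have := brL 1 x y z; rewrite !scale1r. Qed.
Lemma brDr x y z : br x (y + z) = br x y + br x z.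
Proof. by have := brR 1 x y z; rewrite !scale1r. Qed.
Lemma brZl a x z : br (a *: x) z = a *: br x z.
Proof. by have := brL a x 0 z; rewrite !addr0 br0l addr0. Qed.
Lemma brZr a x z : br x (a *: z) = a *: br x z.
Proof. by have := brR a x z 0; rewrite !addr0 br0r addr0. Qed.
Lemma brC x y : br x y = - br y x.
Proof.
have := brxx (x + y); rewrite brDl !brDr !brxx add0r addr0 => /eqP.
by rewrite addr_eq0 => /eqP.
Qed.

Lemma expandV (x : V) : x = \sum_(i < n) coord b i x *: b`_i.
Proof. exact: (coord_vbasis (memvf x)). Qed.

Lemma lin_mem (M : vectType F) (g : V -> M) (U : {vspace M}) :
  (forall a x y, g (a *: x + y) = a *: g x + g y) ->
  (forall i : 'I_n, g b`_i \in U) -> forall x, g x \in U.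
Proof.
move=> hg hb x; rewrite (expandV x) (lin_sum hg (@scale1r _ _)).
apply: memv_suml => i _.
have g0 : g 0 = 0.
  have := hg 1 0 0; rewrite addr0 !scale1r => /esym /eqP.
  by rewrite -subr_eq0 addrK => /eqP.
by have := hg (coord b i x) b`_i 0; rewrite !addr0 g0 addr0 => ->; rewrite memvZ.
Qed.

Lemma wedgeC (x y : V) : wedge x y = - wedge y x.
Proof. by apply/matrixP => i j; rewrite !mxE; ring. Qed.
Lemma wedgeL a (x y w : V) : wedge (a *: x + y) w = a *: wedge x w + wedge y w.
Proof. by apply/matrixP => i j; rewrite !mxE !linearP /=; ring. Qed.
Lemma wedgeR a (x y w : V) : wedge w (a *: x + y) = a *: wedge w x + wedge w y.
Proof. by apply/matrixP => i j; rewrite !mxE !linearP /=; ring. Qed.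
Lemma wedge0l (w : V) : wedge 0 w = 0.
Proof. by apply/matrixP => i j; rewrite !mxE !linear0; ring. Qed.
Lemma wedgexx (x : V) : wedge x x = 0.
Proof. by apply/matrixP => i j; rewrite !mxE; ring. Qed.

Definition d3 (x y w : V) := wedge (br x y) w + wedge (br y w) x + wedge (br w x) y.

Lemma d3C x y w : d3 x y w = d3 y w x.
Proof. by rewrite /d3 [RHS]addrC !addrA. Qed.

Lemma d3L a x x' y w : d3 (a *: x + x') y w = a *: d3 x y w + d3 x' y w.
Proof.
rewrite /d3 brL brR wedgeL wedgeR wedgeL !scalerDr.
have E (M : zmodType) (p q r s t u : M) : (p+q)+(r+s)+(t+u) = p+r+t+(q+s+u).
  by rewrite [p + q + _]addrACA [LHS]addrACA.
exact: E.
Qed.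

Lemma d3C' (x y w : V) : d3 x y w = d3 w x y.
Proof. by rewrite /d3 [LHS]addrC !addrA. Qed.

Lemma d3_mem (x y w : V) : d3 x y w \in boundaries2 br.
Proof.
have base : forall i j k : 'I_n, d3 b`_i b`_j b`_k \in boundaries2 br.
  move=> i j k; apply: memv_span; apply/flatten_mapP; exists b`_i.
    by apply: mem_nth; rewrite size_tuple.
  by apply: (allpairs_f (fun y z => d3 b`_i y z)); apply: mem_nth; rewrite size_tuple.
have s1 : forall (j k : 'I_n) x, d3 x b`_j b`_k \in boundaries2 br.
  move=> j k; apply: (lin_mem (g := fun x => d3 x b`_j b`_k)) => [a x1 x2|i] /=.
    exact: d3L.
  exact: base.
have s2 : forall (k : 'I_n) x y, d3 x y b`_k \in boundaries2 br.
  move=> k x1; apply: (lin_mem (g := fun y => d3 x1 y b`_k)) => [a y1 y2|j] /=.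
    by rewrite !(d3C x1) d3L.
  exact: s1.
move: w; apply: (lin_mem (g := fun w => d3 x y w)) => [a w1 w2|k] /=.
  by rewrite !(d3C' x y) d3L.
exact: s2.
Qed.

Lemma form_Z (al : V -> F) (hal : forall a x y, al (a *: x + y) = a * al x + al y) c v :
  al (c *: v) = c * al v.
Proof.
have a0 : al 0 = 0.
  by have := hal 1 0 0; rewrite addr0 scale1r mul1r => /esym /eqP; rewrite -subr_eq0 addrK => /eqP.
by have := hal c v 0; rewrite !addr0 a0 addr0.
Qed.

Lemma lin_expand (al : V -> F) (hal : forall a x y, al (a *: x + y) = a * al x + al y) x :
  al x = \sum_(i < n) coord b i x * al b`_i.
Proof.
rewrite {1}(expandV x) (lin_sum hal (@mul1r F)); apply: eq_bigr => i _.
exact: form_Z.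
Qed.

Definition Psi (al be : V -> F) (A : 'M[F]_n) : F :=
  \sum_(i < n) \sum_(j < n) al b`_i * be b`_j * A i j.

Lemma PsiL al be a A B : Psi al be (a *: A + B) = a * Psi al be A + Psi al be B.
Proof.
rewrite /Psi mulr_sumr -big_split; apply: eq_bigr => i _.
rewrite mulr_sumr -big_split; apply: eq_bigr => j _; rewrite !mxE /=; ring.
Qed.

Lemma PsiW (al be : V -> F)
  (hal : forall a x y, al (a *: x + y) = a * al x + al y)
  (hbe : forall a x y, be (a *: x + y) = a * be x + be y) x y :
  Psi al be (wedge x y) = al x * be y - al y * be x.
Proof.
rewrite (lin_expand hal x) (lin_expand hbe y) (lin_expand hal y) (lin_expand hbe x).
rewrite !big_distrl /= -sumrB /Psi; apply: eq_bigr => i _.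
rewrite !big_distrr /= -sumrB; apply: eq_bigr => j _; rewrite !mxE /=; ring.
Qed.

Lemma PsiW0 (al be : V -> F)
  (hal : forall a x y, al (a *: x + y) = a * al x + al y)
  (hbe : forall a x y, be (a *: x + y) = a * be x + be y) x y :
  al x = 0 -> be x = 0 -> Psi al be (wedge x y) = 0.
Proof. by move=> h1 h2; rewrite PsiW // h1 h2 !mul0r mulr0 subrr. Qed.

Lemma PsiD3 (al be : V -> F)
  (hal : forall a x y, al (a *: x + y) = a * al x + al y)
  (hbe : forall a x y, be (a *: x + y) = a * be x + be y) x y w :
  Psi al be (d3 x y w) =
    (al (br x y) * be w - al w * be (br x y)) +
    (al (br y w) * be x - al x * be (br y w)) +
    (al (br w x) * be y - al y * be (br w x)).
Proof.
have PD A B : Psi al be (A + B) = Psi al be A + Psi al be B.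
  by have := PsiL al be 1 A B; rewrite scale1r mul1r.
by rewrite /d3 !PD !PsiW.
Qed.

Lemma center_br u : u \in centerL br -> forall x, br u x = 0.
Proof.
rewrite /centerL memvE => /subv_bigcapP H x.
have Hb : forall i : 'I_n, br u b`_i = 0.
  move=> i; have := H i isT; rewrite -memvE memv_ker.
  rewrite linfunE' => [/eqP|a x1 x2]; last exact: brL.
  by rewrite (tnth_nth 0).
rewrite (expandV x) (lin_sum (fun a => brR a u) (@scale1r _ _)) big1 // => i _.
by have := brR (coord b i x) u b`_i 0; rewrite !addr0 br0r addr0 Hb scaler0.
Qed.

Lemma center_br' u : u \in centerL br -> forall x, br x u = 0.
Proof. by move=> hu x; rewrite brC center_br // oppr0. Qed.

Lemma center_in u : (forall i : 'I_n, br u b`_i = 0) -> u \in centerL br.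
Proof.
move=> Hb; rewrite /centerL memvE; apply/subv_bigcapP => i _.
rewrite -memvE memv_ker linfunE' => [|a x1 x2]; last exact: brL.
by rewrite (tnth_nth 0) Hb.
Qed.

Lemma d2L a (A B : 'M[F]_n) : d2 br (a *: A + B) = a *: d2 br A + d2 br B.
Proof.
rewrite /d2 scaler_sumr -big_split; apply: eq_bigr => i _.
rewrite scaler_sumr -big_split; apply: eq_bigr => j _; rewrite !mxE /=.
by rewrite scalerDl scalerA.
Qed.

Lemma br_expand x y :
  br x y = \sum_(i < n) \sum_(j < n) (coord b i x * coord b j y) *: br b`_i b`_j.
Proof.
rewrite {1}(expandV x) (lin_sum (fun a x y => brL a x y _) (@scale1r _ _)).
apply: eq_bigr => i _.
have -> : br (coord b i x *: b`_i) y = coord b i x *: br b`_i y.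
  exact: brZl.
rewrite {1}(expandV y) (lin_sum (fun a => brR a _) (@scale1r _ _)) scaler_sumr.
apply: eq_bigr => j _; by rewrite brZr scalerA.
Qed.

Lemma d2_wedge x y : d2 br (wedge x y) = br x y.
Proof.
set g := fun i j : 'I_n => (coord b i x * coord b j y) *: br b`_i b`_j.
have gii : forall i, g i i = 0 by move=> i; rewrite /g brxx scaler0.
have split1 : forall i j, g i j = (if (i < j)%N then g i j else 0) + (if (j < i)%N then g i j else 0).
  move=> i j; case: ltngtP => h; rewrite ?addr0 ?add0r //.
  by have -> : i = j by apply: val_inj. 
rewrite br_expand.
rewrite (eq_bigr (fun i : 'I_n => \sum_(j < n) (if (i < j)%N then g i j else 0) + \sum_(j < n) (if (j < i)%N then g i j else 0))); last first.
  by move=> i _; rewrite -big_split; apply: eq_bigr => j _; exact: split1.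
rewrite big_split /= [X in _ = _ + X]exchange_big /=.
rewrite -big_split /d2; apply: eq_bigr => i _.
rewrite -big_split big_mkcond /=; apply: eq_bigr => j _.
case: ifP => h; last by rewrite addr0.
rewrite /g /wedge !mxE !(tnth_nth 0) (brC b`_j) scalerN scalerBl; congr (_ + _).
Qed.

Lemma mem_b (i : nat) : (i < n)%N -> b`_i \in (b : seq V).
Proof. by move=> h; apply: mem_nth; rewrite size_tuple. Qed.

Lemma dim_img_d2 : (\dim (derivedL br) <= \dim (linfun (d2 br) @: wedge2 V))%N.
Proof.
apply: dimvS; apply/span_subvP => v /allpairsP [[u w] /= [hu hw ->]].
rewrite -d2_wedge -linfunE' => [|a A B]; last exact: d2L.
apply: memv_img; apply: memv_span; exact: allpairs_f.
Qed.

Lemma cycles_dim :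
  (\dim (cycles2 br) + \dim (linfun (d2 br) @: wedge2 V) = \dim (wedge2 V))%N.
Proof. exact: limg_ker_dim. Qed.

Lemma dim_wedge2 :
  (\dim (wedge2 V) <= sumn [seq size (iota 0 i) | i <- iota 0 n])%N.
Proof.
set s := [seq wedge b`_i b`_j | i <- iota 0 n, j <- iota 0 i].
rewrite -(size_allpairs_dep (fun i j => wedge b`_i b`_j)) -/s.
apply: leq_trans (dim_span s); apply: dimvS.
apply/span_subvP => v /allpairsP [[u w] /= [hu hw ->]].
move: hu hw => /(nthP 0) [p hp <-] /(nthP 0) [q hq <-].
rewrite size_tuple in hp hq.
case: (ltngtP p q) => hpq.
- rewrite wedgeC memvN; apply: memv_span.
  by apply: (@allpairs_f_dep _ (fun _ => nat : eqType) _ (fun i j => wedge b`_i b`_j)); rewrite mem_iota /= ?add0n ?hp ?hq //.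
- apply: memv_span.
  by apply: (@allpairs_f_dep _ (fun _ => nat : eqType) _ (fun i j => wedge b`_i b`_j)); rewrite mem_iota /= ?add0n ?hp ?hq //.
- by rewrite hpq wedgexx mem0v.
Qed.

Section Main.
Variable f : V -> 'rV[F]_7.
Hypotheses (Hf1 : forall a x y, f (a *: x + y) = a *: f x + f y)
  (Hf2 : forall w, exists x, f x = w) (Hf3 : forall x, f x = 0 <-> x \in centerL br)
  (Hf4 : forall x y, f (br x y) = br_L58A2 (f x) (f y)).

Lemma ex_lift (j : 'I_7) : exists x, f x == delta_mx 0 j.
Proof. by have [x hx] := Hf2 (delta_mx 0 j); exists x; apply/eqP. Qed.
Definition lo j := xchoose (ex_lift j).
Lemma f_lo j : f (lo j) = delta_mx 0 j.
Proof. exact: (eqP (xchooseP (ex_lift j))). Qed.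
Definition L (p : nat) := lo (inord p).
Definition al (k : nat) (x : V) := f x 0 (inord k).

Lemma f0 : f 0 = 0.
Proof. by have := Hf1 1 0 0; rewrite addr0 !scale1r => /esym /eqP; rewrite -subr_eq0 addrK => /eqP. Qed.

Lemma al_lin k a x y : al k (a *: x + y) = a * al k x + al k y.
Proof. by rewrite /al Hf1 !mxE. Qed.

Lemma eE p m : (p < 7)%N -> (m < 7)%N -> (delta_mx 0 (inord p) : 'rV[F]_7) 0 (inord m) = (p == m)%N%:R.
Proof.
move=> hp hm; rewrite mxE eqxx /=; congr (_ %:R); congr nat_of_bool.
apply/eqP/eqP => [/(congr1 (@nat_of_ord 7))|->//]; rewrite !inordK // => ->.
Qed.

Lemma alL p k : (p < 7)%N -> (k < 7)%N -> al k (L p) = (p == k)%N%:R.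
Proof. by move=> hp hk; rewrite /al /L f_lo eE. Qed.

Lemma alB p q k : (p < 7)%N -> (q < 7)%N -> (k < 7)%N ->
  al k (br (L p) (L q)) =
  if (k == 3)%N then (p == 0)%N%:R * (q == 1)%N%:R - (p == 1)%N%:R * (q == 0)%N%:R
  else if (k == 4)%N then (p == 0)%N%:R * (q == 2)%N%:R - (p == 2)%N%:R * (q == 0)%N%:R
  else 0.
Proof. move=> hp hq hk; by rewrite /al Hf4 /L !f_lo mxE !eE // (inordK hk). Qed.

Lemma al0 k x : f x = 0 -> al k x = 0.
Proof. by move=> h; rewrite /al h mxE. Qed.

Lemma fbr_cent x : f x = 0 -> forall y, br x y = 0 /\ br y x = 0.
Proof. by move=> /Hf3 h y; rewrite center_br // center_br'. Qed.

Lemma ex_j : exists2 j, (j < 7)%N & br (L 5) (L j) != 0.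
Proof.
suff : [exists j : 'I_7, br (L 5) (lo j) != 0].
  by case/existsP => j hj; exists (nat_of_ord j) => //; rewrite /L inord_val.
apply: contraT; rewrite negb_exists => /forallP H.
have H' : forall j : 'I_7, br (L 5) (lo j) = 0.
  by move=> j; have := H j => /negPn/eqP.
have Hall : forall y, br (L 5) y = 0.
  move=> y; set c := y - \sum_(j < 7) f y 0 j *: lo j.
  have fc : f c = 0.
    have fN : forall u, f (- u) = - f u.
      by move=> u; have := Hf1 (-1) u 0; rewrite addr0 f0 addr0 !scaleN1r.
    have fB : forall u w, f (u - w) = f u - f w.
      by move=> u w; have := Hf1 1 u (- w); rewrite !scale1r fN.
    rewrite /c fB (lin_sum (s := *:%R) Hf1 (@scale1r _ _)).
    rewrite {1}(row_sum_delta (f y)) -sumrB big1 // => j _.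
    by have := Hf1 (f y 0 j) (lo j) 0; rewrite !addr0 f0 addr0 f_lo => ->; rewrite subrr.
  have -> : y = c + \sum_(j < 7) f y 0 j *: lo j by rewrite /c subrK.
  rewrite brDr (fbr_cent fc (L 5)).2 add0r (lin_sum (fun a => brR a _) (@scale1r _ _)).
  by rewrite big1 // => j _; rewrite brZr H' scaler0.
have : f (L 5) = 0 by apply/Hf3; apply: center_in => i; exact: Hall.
move/(congr1 (fun r : 'rV[F]_7 => r 0 (inord 5))); rewrite /L f_lo eE // mxE.
by move/eqP; rewrite eqxx oner_eq0.
Qed.

Lemma dimV8 : \dim (centerL br) = 1%N -> n = 8%N.
Proof.
move=> Hc.
have hg : forall x, linfun f x = f x := linfunE' Hf1.
have Hk : lker (linfun f) = centerL br.
  apply/vspaceP => x; rewrite memv_ker hg.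
  by apply/eqP/idP => [/Hf3|/Hf3].
have Hi : (linfun f @: fullv = fullv)%VS.
  apply/eqP; rewrite eqEsubv subvf /=; apply/subvP => w _.
  by have [x <-] := Hf2 w; rewrite -hg memv_img ?memvf.
have := limg_ker_dim (linfun f) fullv; rewrite capfv Hk Hi Hc dimvf dim_matrix.
by rewrite /dimL => <-.
Qed.

Arguments d3 : simpl never.
Arguments Psi : simpl never.
Arguments al : simpl never.
Arguments L : simpl never.

Lemma all_zero (M : vectType F) (psi : M -> F) (X : seq M) :
  all (fun y => psi y == 0) X -> forall y, y \in X -> psi y = 0.
Proof. by move/allP => h y /h /eqP. Qed.

Lemma bound9 j k z (ze : V -> F) :
  (j < 7)%N -> (k < 7)%N -> (k == 3)%N = false -> (k == 4)%N = false ->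
  (5 == k)%N = false -> (j == k)%N = false ->
  br (L 5) (L j) = z -> f z = 0 -> f (br (L j) (L k)) = 0 -> f (br (L k) (L 5)) = 0 ->
  (forall a x y, ze (a *: x + y) = a * ze x + ze y) -> ze z != 0 ->
  (9 <= \dim (boundaries2 br))%N.
Proof.
move=> hj hk hk3 hk4 h5k hjk Ez hz hjk0 hk50 zlin hzz.
have bz p : br (L p) z = 0 := (fbr_cent hz (L p)).2.
have zb p : br z (L p) = 0 := (fbr_cent hz (L p)).1.
have alz m : al m z = 0 := al0 m hz.
have al00 m : al m 0 = 0 := al0 m f0.
have ze0 : ze 0 = 0.
  by have := zlin 1 0 0; rewrite addr0 scale1r mul1r => /esym /eqP; rewrite -subr_eq0 addrK => /eqP.
have aljk m : al m (br (L j) (L k)) = 0 := al0 m hjk0.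
have alk5 m : al m (br (L k) (L 5)) = 0 := al0 m hk50.
pose X := [:: d3 (L 0) (L 1) (L 2); d3 (L 0) (L 1) (L 4); d3 (L 0) (L 1) (L 5);
              d3 (L 0) (L 1) (L 6); d3 (L 0) (L 2) (L 5); d3 (L 0) (L 2) (L 6);
              d3 (L 5) (L j) (L k); d3 (L 0) (L 2) z; d3 (L 0) (L 1) z].
have sub : (<<X>> <= boundaries2 br)%VS.
  apply/span_subvP => y; rewrite /X.
  do 9! (rewrite in_cons => /predU1P [-> | ]; first exact: d3_mem).
  by rewrite in_nil.
have hX : free X.
  rewrite /X !free_cons nil_free andbT.
  repeat (apply/andP; split).
  - apply: (notin_span (psi := Psi (al 3) (al 2))) => [a A B|y|]; first exact: PsiL.
      repeat (rewrite in_cons => /predU1P [-> | ]; first by rewrite ?(PsiD3 zlin (al_lin _)) ?(PsiD3 (al_lin _) (al_lin _)) ?Ez ?bz ?zb ?alz ?al00 ?ze0 ?aljk ?alk5 ?alL ?alB //= ?hk3 ?hk4 ?h5k ?hjk ?eqxx /=; ring).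
      by rewrite in_nil.
    have -> : Psi (al 3) (al 2) (d3 (L 0) (L 1) (L 2)) = 1 by rewrite ?(PsiD3 zlin (al_lin _)) ?(PsiD3 (al_lin _) (al_lin _)) ?Ez ?bz ?zb ?alz ?al00 ?ze0 ?aljk ?alk5 ?alL ?alB //= ?hk3 ?hk4 ?h5k ?hjk ?eqxx /=; ring.
    by rewrite ?oppr_eq0 ?oner_neq0.
  - apply: (notin_span (psi := Psi (al 3) (al 4))) => [a A B|y|]; first exact: PsiL.
      repeat (rewrite in_cons => /predU1P [-> | ]; first by rewrite ?(PsiD3 zlin (al_lin _)) ?(PsiD3 (al_lin _) (al_lin _)) ?Ez ?bz ?zb ?alz ?al00 ?ze0 ?aljk ?alk5 ?alL ?alB //= ?hk3 ?hk4 ?h5k ?hjk ?eqxx /=; ring).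
      by rewrite in_nil.
    have -> : Psi (al 3) (al 4) (d3 (L 0) (L 1) (L 4)) = 1 by rewrite ?(PsiD3 zlin (al_lin _)) ?(PsiD3 (al_lin _) (al_lin _)) ?Ez ?bz ?zb ?alz ?al00 ?ze0 ?aljk ?alk5 ?alL ?alB //= ?hk3 ?hk4 ?h5k ?hjk ?eqxx /=; ring.
    by rewrite ?oppr_eq0 ?oner_neq0.
  - apply: (notin_span (psi := Psi (al 3) (al 5))) => [a A B|y|]; first exact: PsiL.
      repeat (rewrite in_cons => /predU1P [-> | ]; first by rewrite ?(PsiD3 zlin (al_lin _)) ?(PsiD3 (al_lin _) (al_lin _)) ?Ez ?bz ?zb ?alz ?al00 ?ze0 ?aljk ?alk5 ?alL ?alB //= ?hk3 ?hk4 ?h5k ?hjk ?eqxx /=; ring).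
      by rewrite in_nil.
    have -> : Psi (al 3) (al 5) (d3 (L 0) (L 1) (L 5)) = 1 by rewrite ?(PsiD3 zlin (al_lin _)) ?(PsiD3 (al_lin _) (al_lin _)) ?Ez ?bz ?zb ?alz ?al00 ?ze0 ?aljk ?alk5 ?alL ?alB //= ?hk3 ?hk4 ?h5k ?hjk ?eqxx /=; ring.
    by rewrite ?oppr_eq0 ?oner_neq0.
  - apply: (notin_span (psi := Psi (al 3) (al 6))) => [a A B|y|]; first exact: PsiL.
      repeat (rewrite in_cons => /predU1P [-> | ]; first by rewrite ?(PsiD3 zlin (al_lin _)) ?(PsiD3 (al_lin _) (al_lin _)) ?Ez ?bz ?zb ?alz ?al00 ?ze0 ?aljk ?alk5 ?alL ?alB //= ?hk3 ?hk4 ?h5k ?hjk ?eqxx /=; ring).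
      by rewrite in_nil.
    have -> : Psi (al 3) (al 6) (d3 (L 0) (L 1) (L 6)) = 1 by rewrite ?(PsiD3 zlin (al_lin _)) ?(PsiD3 (al_lin _) (al_lin _)) ?Ez ?bz ?zb ?alz ?al00 ?ze0 ?aljk ?alk5 ?alL ?alB //= ?hk3 ?hk4 ?h5k ?hjk ?eqxx /=; ring.
    by rewrite ?oppr_eq0 ?oner_neq0.
  - apply: (notin_span (psi := Psi (al 4) (al 5))) => [a A B|y|]; first exact: PsiL.
      repeat (rewrite in_cons => /predU1P [-> | ]; first by rewrite ?(PsiD3 zlin (al_lin _)) ?(PsiD3 (al_lin _) (al_lin _)) ?Ez ?bz ?zb ?alz ?al00 ?ze0 ?aljk ?alk5 ?alL ?alB //= ?hk3 ?hk4 ?h5k ?hjk ?eqxx /=; ring).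
      by rewrite in_nil.
    have -> : Psi (al 4) (al 5) (d3 (L 0) (L 2) (L 5)) = 1 by rewrite ?(PsiD3 zlin (al_lin _)) ?(PsiD3 (al_lin _) (al_lin _)) ?Ez ?bz ?zb ?alz ?al00 ?ze0 ?aljk ?alk5 ?alL ?alB //= ?hk3 ?hk4 ?h5k ?hjk ?eqxx /=; ring.
    by rewrite ?oppr_eq0 ?oner_neq0.
  - apply: (notin_span (psi := Psi (al 4) (al 6))) => [a A B|y|]; first exact: PsiL.
      repeat (rewrite in_cons => /predU1P [-> | ]; first by rewrite ?(PsiD3 zlin (al_lin _)) ?(PsiD3 (al_lin _) (al_lin _)) ?Ez ?bz ?zb ?alz ?al00 ?ze0 ?aljk ?alk5 ?alL ?alB //= ?hk3 ?hk4 ?h5k ?hjk ?eqxx /=; ring).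
      by rewrite in_nil.
    have -> : Psi (al 4) (al 6) (d3 (L 0) (L 2) (L 6)) = 1 by rewrite ?(PsiD3 zlin (al_lin _)) ?(PsiD3 (al_lin _) (al_lin _)) ?Ez ?bz ?zb ?alz ?al00 ?ze0 ?aljk ?alk5 ?alL ?alB //= ?hk3 ?hk4 ?h5k ?hjk ?eqxx /=; ring.
    by rewrite ?oppr_eq0 ?oner_neq0.
  - apply: (notin_span (psi := Psi ze (al k))) => [a A B|y|]; first exact: PsiL.
      repeat (rewrite in_cons => /predU1P [-> | ]; first by rewrite ?(PsiD3 zlin (al_lin _)) ?(PsiD3 (al_lin _) (al_lin _)) ?Ez ?bz ?zb ?alz ?al00 ?ze0 ?aljk ?alk5 ?alL ?alB //= ?hk3 ?hk4 ?h5k ?hjk ?eqxx /=; ring).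
      by rewrite in_nil.
    have -> : Psi ze (al k) (d3 (L 5) (L j) (L k)) = ze z by rewrite ?(PsiD3 zlin (al_lin _)) ?(PsiD3 (al_lin _) (al_lin _)) ?Ez ?bz ?zb ?alz ?al00 ?ze0 ?aljk ?alk5 ?alL ?alB //= ?hk3 ?hk4 ?h5k ?hjk ?eqxx /=; ring.
    by rewrite ?oppr_eq0 ?oner_neq0.
  - apply: (notin_span (psi := Psi ze (al 4))) => [a A B|y|]; first exact: PsiL.
      repeat (rewrite in_cons => /predU1P [-> | ]; first by rewrite ?(PsiD3 zlin (al_lin _)) ?(PsiD3 (al_lin _) (al_lin _)) ?Ez ?bz ?zb ?alz ?al00 ?ze0 ?aljk ?alk5 ?alL ?alB //= ?hk3 ?hk4 ?h5k ?hjk ?eqxx /=; ring).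
      by rewrite in_nil.
    have -> : Psi ze (al 4) (d3 (L 0) (L 2) z) = - ze z by rewrite ?(PsiD3 zlin (al_lin _)) ?(PsiD3 (al_lin _) (al_lin _)) ?Ez ?bz ?zb ?alz ?al00 ?ze0 ?aljk ?alk5 ?alL ?alB //= ?hk3 ?hk4 ?h5k ?hjk ?eqxx /=; ring.
    by rewrite ?oppr_eq0 ?oner_neq0.
  - apply: (notin_span (psi := Psi ze (al 3))) => [a A B|y|]; first exact: PsiL.
      repeat (rewrite in_cons => /predU1P [-> | ]; first by rewrite ?(PsiD3 zlin (al_lin _)) ?(PsiD3 (al_lin _) (al_lin _)) ?Ez ?bz ?zb ?alz ?al00 ?ze0 ?aljk ?alk5 ?alL ?alB //= ?hk3 ?hk4 ?h5k ?hjk ?eqxx /=; ring).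
      by rewrite in_nil.
    have -> : Psi ze (al 3) (d3 (L 0) (L 1) z) = - ze z by rewrite ?(PsiD3 zlin (al_lin _)) ?(PsiD3 (al_lin _) (al_lin _)) ?Ez ?bz ?zb ?alz ?al00 ?ze0 ?aljk ?alk5 ?alL ?alB //= ?hk3 ?hk4 ?h5k ?hjk ?eqxx /=; ring.
    by rewrite ?oppr_eq0 ?oner_neq0.
have := dimvS sub; by rewrite (eqnP hX).
Qed.

Lemma fzero x : (forall m, (m < 7)%N -> al m x = 0) -> f x = 0.
Proof.
move=> H; apply/rowP => m; rewrite mxE.
by have := H m (ltn_ord m); rewrite /al inord_val.
Qed.

Lemma fbr0 p q : (p < 7)%N -> (q < 7)%N ->
  (p == 0)%N%:R * (q == 1)%N%:R - (p == 1)%N%:R * (q == 0)%N%:R = 0 :> F ->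
  (p == 0)%N%:R * (q == 2)%N%:R - (p == 2)%N%:R * (q == 0)%N%:R = 0 :> F ->
  f (br (L p) (L q)) = 0.
Proof. by move=> hp hq h1 h2; apply: fzero => m hm; rewrite alB // h1 h2 !if_same. Qed.

Lemma bound9_all : (9 <= \dim (boundaries2 br))%N.
Proof.
have [j hj hz0] := ex_j.
have [i0 hi0] : exists i0 : 'I_n, coord b i0 (br (L 5) (L j)) != 0.
  apply/existsP; apply: contraT; rewrite negb_exists => /forallP H.
  move: hz0; rewrite (expandV (br (L 5) (L j))) big1 ?eqxx // => i _.
  by have := H i => /negPn/eqP ->; rewrite scale0r.
have zl : forall a x y, coord b i0 (a *: x + y) = a * coord b i0 x + coord b i0 y.
  by move=> a x y; rewrite linearP.
have T : forall k, (k < 7)%N -> (k == 3)%N = false -> (k == 4)%N = false ->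
  (5 == k)%N = false -> (j == k)%N = false ->
  f (br (L 5) (L j)) = 0 -> f (br (L j) (L k)) = 0 -> f (br (L k) (L 5)) = 0 ->
  (9 <= \dim (boundaries2 br))%N.
  move=> k hk h3 h4 h5 hjk hz h1 h2.
  exact: (bound9 hj hk h3 h4 h5 hjk erefl hz h1 h2 zl hi0).
clear zl hi0; move: hj hz0 T; case: j => [|[|[|[|[|[|[|j]]]]]]] //= _ hz0 T.
- by apply: (T 6) => //; apply: fbr0 => //=; ring.
- by apply: (T 2) => //; apply: fbr0 => //=; ring.
- by apply: (T 1) => //; apply: fbr0 => //=; ring.
- by apply: (T 6) => //; apply: fbr0 => //=; ring.
- by apply: (T 6) => //; apply: fbr0 => //=; ring.
- by move: hz0; rewrite brxx eqxx.
- by apply: (T 1) => //; apply: fbr0 => //=; ring.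
Qed.

Lemma schur_le16 : \dim (centerL br) = 1%N -> \dim (derivedL br) = 3%N ->
  (schur_dim br <= 16)%N.
Proof.
move=> Hc Hd.
have n8 := dimV8 Hc.
have w28 : (\dim (wedge2 V) <= 28)%N.
  by apply: leq_trans dim_wedge2 _; rewrite n8.
have := cycles_dim; have := dim_img_d2; rewrite Hd.
have := bound9_all.
rewrite /schur_dim.
move: (\dim (cycles2 br)) (\dim (boundaries2 br)) (\dim (linfun (d2 br) @: wedge2 V)) w28.
move=> w c bd i; lia.
Qed.
End Main.
End Lie.

Theorem lemma2p9 (F : closedFieldType) (hF : 2 \notin [pchar F]) :
  forall (V : vectType F) (br : V -> V -> V),
    is_lie_bracket br ->
    nilpotentL br ->
    \dim (derivedL br) = 3%N ->
    \dim (centerL br) = 1%N ->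
    s_inv br = 5 ->
    ~ quot_center_iso_L58A2 br.
Proof.
move=> V br Hl _ Hder Hc Hs [f [Hf1 Hf2 Hf3 Hf4]].
have H16 := schur_le16 Hl Hf1 Hf2 Hf3 Hf4 Hc Hder.
have n8 := dimV8 Hf1 Hf2 Hf3 Hc.
move: Hs; rewrite /s_inv n8 /=.
move: (schur_dim br) H16 => s hs; lia.
Qed.
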